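(* Let $A\in\mathbb{R}^{2\times 2}$ with $\mathrm{Re}(\lambda_1(A))>\mathrm{Re}(\lambda_2(A))$ (so $n=2$, $r=1$), and consider the Oja flow $\frac{dU}{dt}=(I_2-UU^{\top})AU$ with $U(0)\in\mathbb{R}^{2}$, $U(0)^{\top}U(0)=1$. Let $K(t)=\Psi^{-1}U(t)$ and $\Sigma=\Psi^{\top}\Psi$ with entries $\Sigma_{11},\Sigma_{22}$ on the diagonal. If $K(0)\neq\begin{bsmallmatrix}0,&\pm\Sigma_{22}^{-1/2}\end{bsmallmatrix}^{\top}$, then $U(t)=\Psi K(t)$ converges to $\mathcal{U}=\{\pm\Sigma_{11}^{-1/2}\psi_1(A)\}$.
   Context: $\Psi=[\psi_1(A),\psi_2(A)]$ is the matrix of unit-norm eigenvectors of $A$ for $\lambda_1(A),\lambda_2(A)$ (these eigenvalues are real and distinct under the hypothesis, so $\Psi$ is real and invertible). *)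

(* Defs.v *)
From HB Require Import structures.
From mathcomp Require Import all_boot all_order all_algebra.
From mathcomp Require Import all_classical all_reals all_analysis.
Set Implicit Arguments. Unset Strict Implicit. Unset Printing Implicit Defensive.
Import Order.TTheory GRing.Theory Num.Theory.
Import numFieldNormedType.Exports.
Local Open Scope ring_scope.

Definition vec2 (R : ringType) (a b : R) : 'cV[R]_2 :=
  \col_(i < 2) (if i == ord0 then a else b).

Definition dotc (R : ringType) (n : nat) (u v : 'cV[R]_n) : R :=
  (u^T *m v) ord0 ord0.

Definition oja_rhs (R : ringType) (n : nat) (A : 'M[R]_n) (U : 'cV[R]_n)
  : 'cV[R]_n := (1%:M - U *m U^T) *m A *m U.

(* Main.v *)
Require Import Defs.
From HB Require Import structures.
From mathcomp Require Import all_boot all_order all_algebra.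
From mathcomp Require Import all_classical all_reals all_analysis.
From mathcomp Require Import ring lra.
Import Order.TTheory GRing.Theory Num.Theory.
Import numFieldNormedType.Exports.
Local Open Scope ring_scope.
Local Open Scope classical_set_scope.

Section Helpers.
Context {R : realType}.

Lemma entry_derive m n (f : R -> 'M[R]_(m, n)) (t : R) (df : 'M[R]_(m, n)) i j :
  is_derive t 1 f df -> is_derive t 1 (fun s => f s i j) (df i j).
Proof.
move=> [fd fv].
have H : (fun h => h^-1 *: ((f \o shift t) (h *: 1) - f t)) @ 0^' --> df.
  by rewrite -fv; exact: fd.
have H2 : (fun h : R => h^-1 *: (((fun s => f s i j) \o shift t) (h *: 1) - f t i j)) @ 0^' --> df i j.
  have := cvg_comp _ _ H (@coord_continuous R m n i j df).
  apply: cvg_trans; apply: near_eq_cvg; near=> h => /=.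
  by rewrite !mxE.
apply: DeriveDef; first by apply/cvg_ex; exists (df i j).
exact: cvg_lim H2.
Unshelve. all: by end_near. Qed.

Lemma dM {f g : R -> R} {x df dg : R} : is_derive x 1 f df -> is_derive x 1 g dg ->
  is_derive x 1 (fun t => f t * g t) (f x * dg + g x * df).
Proof. move=> H1 H2; exact: (is_deriveM H1 H2). Qed.

Lemma dD {f g : R -> R} {x df dg : R} : is_derive x 1 f df -> is_derive x 1 g dg ->
  is_derive x 1 (fun t => f t + g t) (df + dg).
Proof. move=> H1 H2; exact: (is_deriveD H1 H2). Qed.

Lemma dB {f g : R -> R} {x df dg : R} : is_derive x 1 f df -> is_derive x 1 g dg ->
  is_derive x 1 (fun t => f t - g t) (df - dg).
Proof. move=> H1 H2; exact: (is_deriveB H1 H2). Qed.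

Lemma dC (c x : R) : is_derive x 1 (fun _ => c) 0.
Proof. exact: is_derive_cst. Qed.

Lemma dcM (c : R) {f : R -> R} {x df : R} : is_derive x 1 f df ->
  is_derive x 1 (fun t => c * f t) (c * df).
Proof. move=> H; have := is_deriveZ c H; by []. Qed.

Lemma dexp (c x : R) : is_derive x 1 (fun t => expR (c * t)) (c * expR (c * x)).
Proof.
have H1 : is_derive x 1 (fun t : R => c * t) c.
  have := @dcM c id x 1 (is_derive_id x 1); by rewrite mulr1.
have := is_derive1_comp (is_derive_expR (c * x)) H1.
by rewrite mulrC.
Qed.

Section W.
Variable (A : set R).
Lemma wM (f g : R -> R) : {within A, continuous f} -> {within A, continuous g} ->
  {within A, continuous (fun t => f t * g t)}.
Proof. move=> cf cg x; exact: continuousM (cf x) (cg x). Qed.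
Lemma wD (f g : R -> R) : {within A, continuous f} -> {within A, continuous g} ->
  {within A, continuous (fun t => f t + g t)}.
Proof. move=> cf cg x; exact: continuousD (cf x) (cg x). Qed.
Lemma wB (f g : R -> R) : {within A, continuous f} -> {within A, continuous g} ->
  {within A, continuous (fun t => f t - g t)}.
Proof. move=> cf cg x; exact: continuousB (cf x) (cg x). Qed.
Lemma wcomp (T : topologicalType) (f : R -> T) (g : T -> R) : {within A, continuous f} -> continuous g ->
  {within A, continuous (fun t => g (f t))}.
Proof. move=> cf cg x; exact: continuous_comp (cf x) (cg _). Qed.
Lemma wC (c : R) : {within A, continuous (fun _ : R => c)}.
Proof. apply: continuous_subspaceT => x; exact: cvg_cst. Qed.
Lemma wid : {within A, continuous (fun t : R => t)}.
Proof. by apply: continuous_subspaceT => x. Qed.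
End W.

Lemma gronwall (f df m : R -> R) :
  {within `[0, +oo[, continuous f} ->
  {within `[0, +oo[, continuous m} ->
  (forall t : R, 0 < t -> is_derive t 1 f (df t)) ->
  (forall t : R, 0 < t -> df t <= m t * f t) ->
  (forall t : R, 0 <= t -> 0 <= f t) -> f 0 = 0 -> forall t : R, 0 <= t -> f t = 0.
Proof.
move=> cf cm dff dle fge0 f0 T; rewrite le_eqVlt => /orP[/eqP<-//|T0].
have sub : `[0, T] `<=` `[0, +oo[.
  by apply: subset_itvl; rewrite bnd_simp.
have [c cin cmax] := EVT_max (ltW T0) (continuous_subspaceW sub cm).
set M := m c.
pose G t := f t * expR (- M * t).
have dG : forall t, t \in `]0, T[%R -> is_derive t 1 G
    (f t * (- M * expR (- M * t)) + expR (- M * t) * df t).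
  move=> t; rewrite in_itv /= => /andP[t0 _].
  exact: dM (dff t t0) (dexp (- M) t).
have cG : {within `[0, T], continuous G}.
  apply: wM; first exact: continuous_subspaceW sub cf.
  apply: (@wcomp _ _ (fun t : R => - M * t) expR); last exact: continuous_expR.
  by apply: wM; [exact: wC|exact: wid].
have [d din HG] := MVT T0 dG cG.
have d0 : 0 < d by move: din; rewrite in_itv /= => /andP[].
have dT : d <= T by move: din; rewrite in_itv /= => /andP[_ /ltW].
have md : m d <= M by apply: cmax; rewrite in_itv /= (ltW d0) dT.
rewrite /G f0 mul0r subr0 in HG.
have : f T * expR (- M * T) <= 0.
  rewrite HG subr0; apply: mulr_le0_ge0; last exact: ltW.
  have := dle d d0; have := fge0 d (ltW d0).
  have := expR_gt0 (- M * d).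
  set e := expR _ => e0 fd0 dl.
  have : df d <= M * f d by apply: le_trans dl _; rewrite ler_wpM2r.
  move=> h; nra.
have := expR_gt0 (- M * T); have := fge0 T (ltW T0); nra.
Qed.

Lemma core (k0 k1 q : R -> R) (l1 l2 g : R) :
  l2 < l1 ->
  {within `[0, +oo[, continuous k0} -> {within `[0, +oo[, continuous k1} ->
  (forall t, q t = l1 * (k0 t * k0 t) + (l1 + l2) * g * (k0 t * k1 t) + l2 * (k1 t * k1 t)) ->
  (forall t : R, 0 < t -> is_derive t 1 k0 ((l1 - q t) * k0 t)) ->
  (forall t : R, 0 < t -> is_derive t 1 k1 ((l2 - q t) * k1 t)) ->
  k0 0 * k0 0 + 2 * g * (k0 0 * k1 0) + k1 0 * k1 0 = 1 ->
  k0 0 != 0 ->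
  exists2 s : R, (s = 1 \/ s = -1) &
    (k0 t @[t --> +oo] --> s) /\ (k1 t @[t --> +oo] --> 0).
Proof.
move=> l21 ck0 ck1 hq dk0 dk1 N0 c0n0.
set c0 := k0 0; set c1 := k1 0; set del := l1 - l2.
have del0 : 0 < del by rewrite subr_gt0.
pose N t := k0 t * k0 t + 2 * g * (k0 t * k1 t) + k1 t * k1 t.
pose w t := 1 - N t.
pose E t := expR (del * t).
pose D t := c0 * (k1 t * E t) - c1 * k0 t.
pose F t := w t * w t + D t * D t.
pose dF t := - 4 * q t * (w t * w t) + 2 * (l1 - q t) * (D t * D t).
pose m t := 4 * `|q t| + 2 * `|l1|.
have cq : {within `[0, +oo[, continuous q}.
  have -> : q = fun t => l1 * (k0 t * k0 t) + (l1 + l2) * g * (k0 t * k1 t) + l2 * (k1 t * k1 t).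
    by apply/funext => t; rewrite hq.
  by repeat (apply: wD || apply: wM || apply: wC || assumption).
have cE : {within `[0, +oo[, continuous E}.
  apply: (@wcomp _ _ (fun t : R => del * t) expR); last exact: continuous_expR.
  by apply: wM; [exact: wC|exact: wid].
have cF : {within `[0, +oo[, continuous F}.
  by rewrite /F /D /w /N; repeat (apply: wB || apply: wD || apply: wM || apply: wC || assumption).
have cm : {within `[0, +oo[, continuous m}.
  apply: wD; apply: wM; try exact: wC.
  exact: (@wcomp _ _ q (@Num.norm R R)) cq (@norm_continuous _ _).
have dFd : forall t : R, 0 < t -> is_derive t 1 F (dF t).
  move=> t t0.
  have d0 := dk0 t t0; have d1 := dk1 t t0.
  have dN := dD (dD (dM d0 d0) (dcM (2 * g) (dM d0 d1))) (dM d1 d1).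
  have dw := dB (dC 1 t) dN.
  have dDD := dB (dcM c0 (dM d1 (dexp del t))) (dcM c1 d0).
  apply: is_derive_eq (dD (dM dw dw) (dM dDD dDD)) _.
  rewrite /dF /w /D /N /E hq /del; ring.
have dFle : forall t : R, 0 < t -> dF t <= m t * F t.
  move=> t _; rewrite /dF /m /F.
  set a := q t; set W := w t * w t; set DD := D t * D t.
  have W0 : 0 <= W by rewrite /W -expr2 sqr_ge0.
  have DD0 : 0 <= DD by rewrite /DD -expr2 sqr_ge0.
  have p1 : 0 <= (`|a| + a) * W.
    by apply: mulr_ge0 => //; rewrite -lerBlDr sub0r ler_normr lexx orbT.
  have p3 : 0 <= (`|a| + a) * DD.
    by apply: mulr_ge0 => //; rewrite -lerBlDr sub0r ler_normr lexx orbT.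
  have p2 : 0 <= (`|l1| - l1) * DD.
    by apply: mulr_ge0 => //; rewrite subr_ge0 ler_norm.
  have p4 : 0 <= `|a| * DD by apply: mulr_ge0.
  have p5 : 0 <= `|l1| * W by apply: mulr_ge0.
  nra.
have Fge0 : forall t : R, 0 <= t -> 0 <= F t.
  by move=> t _; rewrite /F addr_ge0 // -expr2 sqr_ge0.
have F00 : F 0 = 0.
  rewrite /F /w /D /E mulr0 expR0 mulr1 /N -/c0 -/c1 N0; ring.
have F0 := @gronwall F dF m cF cm dFd dFle Fge0 F00.
have wD0 : forall t : R, 0 <= t -> w t = 0 /\ D t = 0.
  move=> t t0; have := F0 t t0; rewrite /F => /eqP.
  rewrite paddr_eq0 -?expr2 ?sqr_ge0 // => /andP[].
  by rewrite !sqrf_eq0 => /eqP -> /eqP ->.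
set r := c1 / c0.
pose eps t := expR (- (del * t)).
pose hh x := 1 + 2 * g * r * x + r ^+ 2 * (x * x).
have hk1 : forall t : R, 0 <= t -> k1 t = r * k0 t * eps t.
  move=> t t0; have [_ /eqP] := wD0 t t0; rewrite /D subr_eq0 => /eqP h.
  have Ene : E t != 0 by rewrite /E expR_eq0.
  rewrite /eps expRN -/(E t) /r.
  apply/(mulIf Ene)/(mulfI c0n0); rewrite -mulrA h -/c0; field.
  by apply/andP; split.
have hprod : forall t : R, 0 <= t -> k0 t ^+ 2 * hh (eps t) = 1.
  move=> t t0; have [/eqP] := wD0 t t0; rewrite /w subr_eq0 => /eqP h _.
  rewrite h /N (hk1 t t0) /hh; ring.
have k0n0 : forall t : R, 0 <= t -> k0 t != 0.
  move=> t t0; apply/negP => /eqP h; have := hprod t t0.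
  by rewrite h expr0n /= mul0r => /eqP; rewrite eq_sym oner_eq0.
have [s hs sc0] : exists2 s : R, (s = 1 \/ s = -1) & 0 < s * c0.
  case: (ltrgtP c0 0) => [c0lt|c0gt|c0e]; last by move: c0n0; rewrite -/c0 c0e eqxx.
    by exists (-1); [right|rewrite mulN1r oppr_gt0].
  by exists 1; [left|rewrite mul1r].
have sn0 : s != 0 by case: hs => ->; rewrite ?oppr_eq0 oner_eq0.
have spos : forall t : R, 0 <= t -> 0 < s * k0 t.
  move=> t t0; rewrite ltNge; apply/negP => hle.
  have sub : `[0, t] `<=` `[0, +oo[ by apply: subset_itvl; rewrite bnd_simp.
  have cf : {within `[0, t], continuous (fun x => s * k0 x)}.
    by apply: wM; [exact: wC|exact: continuous_subspaceW sub ck0].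
  have hv : Num.min (s * k0 0) (s * k0 t) <= 0 <= Num.max (s * k0 0) (s * k0 t).
    apply/andP; split.
      by rewrite ge_min hle orbT.
    by rewrite le_max ltW // orTb.
  have [c cin hc] := IVT t0 cf hv.
  move: hc => /eqP; rewrite mulf_eq0 (negPf sn0) /=; apply/negP.
  by apply: k0n0; move: cin; rewrite in_itv /= => /andP[].
have hform : forall t : R, 0 <= t -> k0 t = s * Num.sqrt ((hh (eps t))^-1).
  move=> t t0; have h := hprod t t0.
  have k2n0 : k0 t ^+ 2 != 0 by rewrite sqrf_eq0 k0n0.
  have hhe : (hh (eps t))^-1 = k0 t ^+ 2.
    have : hh (eps t) = (k0 t ^+ 2)^-1.
      by apply: (mulfI k2n0); rewrite h divff.
    by move=> ->; rewrite invrK.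
  rewrite hhe sqrtr_sqr; have := spos t t0.
  case: hs => -> sp.
    by rewrite mul1r gtr0_norm // -(mul1r (k0 t)).
  rewrite ltr0_norm; first by rewrite mulN1r opprK.
  by rewrite -oppr_gt0 -mulN1r.
have heps : eps t @[t --> +oo] --> 0.
  have h1 : (fun t => del * t) @ +oo --> +oo.
    apply/cvgryPge => A.
    apply: filterS (nbhs_pinfty_ge (num_real (A / del))) => t.
    by rewrite ler_pdivrMr // mulrC.
  exact: (cvg_comp (fun t => del * t) (fun x => expR (- x)) h1 (@cvgr_expR R)).
have hhc : hh (eps t) @[t --> +oo] --> (1 : R).
  have H : hh (eps t) @[t --> +oo] --> (1 + 2 * g * r * 0 + r ^+ 2 * (0 * 0) : R).
    apply: cvgD; first apply: cvgD.
    - exact: cvg_cst.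
    - exact: cvgMl_tmp.
    - by apply: cvgMl_tmp; apply: cvgM.
  by rewrite !mulr0 !addr0 in H.
have hv : (hh (eps t))^-1 @[t --> +oo] --> (1 : R).
  by rewrite -[X in _ --> X]invr1; exact: (cvgV (oner_neq0 R) hhc).
have gk : s * Num.sqrt ((hh (eps t))^-1) @[t --> +oo] --> s.
  apply: cvg_trans (cvgMl_tmp (a := s) (cvg_comp _ _ hv (@sqrt_continuous R 1))) _.
  by rewrite sqrtr1 mulr1.
exists s => //; split.
  apply: cvg_trans _ gk; apply: near_eq_cvg; near=> t.
  by symmetry; apply: hform; near: t; exact: nbhs_pinfty_ge.
have H : (fun t => r * (s * Num.sqrt ((hh (eps t))^-1)) * eps t) @ +oo --> (r * s * 0 : R).
  by apply: cvgM; [exact: cvgMl_tmp|exact: heps].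
rewrite mulr0 in H.
apply: cvg_trans _ H; apply: near_eq_cvg; near=> t.
have t0 : 0 <= t by near: t; exact: nbhs_pinfty_ge.
by rewrite (hk1 t t0) -(hform t t0).
Unshelve. all: by end_near. Qed.

Lemma sum2 (f : 'I_2 -> R) : \sum_(i < 2) f i = f ord0 + f ord_max.
Proof. by rewrite big_ord_recr big_ord1 /=; congr (f _ + _); apply: val_inj. Qed.

Lemma I2P (i : 'I_2) : i = ord0 \/ i = ord_max.
Proof.
case: i => [[|[|n]] Hi]; [left|right|by []]; exact: val_inj.
Qed.

Lemma oja_entry (A : 'M[R]_2) (u : 'cV[R]_2) i :
  (oja_rhs A u) i ord0 =
  (A i ord0 * u ord0 ord0 + A i ord_max * u ord_max ord0) -
  u i ord0 * (u ord0 ord0 * (A ord0 ord0 * u ord0 ord0 + A ord0 ord_max * u ord_max ord0) +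
           u ord_max ord0 * (A ord_max ord0 * u ord0 ord0 + A ord_max ord_max * u ord_max ord0)).
Proof.
rewrite /oja_rhs !mxE !sum2 !mxE !sum2 !mxE !big_ord1 !mxE.
by case: (I2P i) => ->; rewrite /= ?mulr1n ?mulr0n; ring.
Qed.
End Helpers.

Local Notation o := (@ord0 1).
Local Notation x := (@ord_max 1).
Local Notation z := (@ord0 0).

Theorem proposition4 (R : realType) (A : 'M[R]_2)
  (lambda1 lambda2 : R) (psi1 psi2 : 'cV[R]_2)
  (U : R -> 'cV[R]_2) :
  lambda2 < lambda1 ->
  A *m psi1 = lambda1 *: psi1 -> dotc psi1 psi1 = 1 ->
  A *m psi2 = lambda2 *: psi2 -> dotc psi2 psi2 = 1 ->
  {within `[0, +oo[, continuous U} ->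
  (forall t : R, 0 < t -> is_derive t 1 U (oja_rhs A (U t))) ->
  dotc (U 0) (U 0) = 1 ->
  let Psi : 'M[R]_2 := row_mx psi1 psi2 in
  let Sigma : 'M[R]_2 := Psi^T *m Psi in
  let K : R -> 'cV[R]_2 := fun t => invmx Psi *m U t in
  (forall s : R, (s = 1 \/ s = -1) ->
     K 0 != vec2 0 (s * (Num.sqrt (Sigma ord_max ord_max))^-1)) ->
  exists2 s : R, (s = 1 \/ s = -1) &
    U t @[t --> +oo] --> s * (Num.sqrt (Sigma ord0 ord0))^-1 *: psi1.
Proof.
move=> l21 eA1 n1 eA2 n2 cU dU nU0 Psi Sigma K hK.
have ePsi0 : forall k, Psi k o = psi1 k z.
  move=> k; rewrite -(row_mxEl psi1 psi2 k z); congr (row_mx _ _ _ _); exact: val_inj.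
have ePsi1 : forall k, Psi k x = psi2 k z.
  move=> k; rewrite -(row_mxEr psi1 psi2 k z); congr (row_mx _ _ _ _); exact: val_inj.
pose a0 := psi1 o z; pose a1 := psi1 x z; pose b0 := psi2 o z; pose b1 := psi2 x z.
have na : a0 * a0 + a1 * a1 = 1 by move: n1; rewrite /dotc !mxE sum2 !mxE.
have nb : b0 * b0 + b1 * b1 = 1 by move: n2; rewrite /dotc !mxE sum2 !mxE.
have nu : U 0 o z * U 0 o z + U 0 x z * U 0 x z = 1 by move: nU0; rewrite /dotc !mxE sum2 !mxE.
clear n1 n2 nU0.
have eA i (v : 'cV[R]_2) l : A *m v = l *: v ->
    A i o * v o z + A i x * v x z = l * v i z.
  by move=> /(congr1 (fun M : 'cV[R]_2 => M i z)); rewrite !mxE sum2.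
have e10 : A o o * a0 + A o x * a1 = lambda1 * a0 := eA o _ _ eA1.
have e11 : A x o * a0 + A x x * a1 = lambda1 * a1 := eA x _ _ eA1.
have e20 : A o o * b0 + A o x * b1 = lambda2 * b0 := eA o _ _ eA2.
have e21 : A x o * b0 + A x x * b1 = lambda2 * b1 := eA x _ _ eA2.
clear eA.
have Sig0 : Sigma o o = 1.
  by rewrite /Sigma mxE sum2 ![Psi^T _ _]mxE !ePsi0; exact: na.
have Sig1 : Sigma x x = 1.
  by rewrite /Sigma mxE sum2 ![Psi^T _ _]mxE !ePsi1; exact: nb.
pose d := a0 * b1 - a1 * b0.
have dn0 : d != 0.
  apply/negP => /eqP d0.
  pose g := a0 * b0 + a1 * b1.
  have hb0 : b0 = g * a0.
    have : g * a0 - d * a1 = b0 * (a0 * a0 + a1 * a1) by rewrite /g /d; ring.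
    by rewrite na mulr1 d0 mul0r subr0 => <-.
  have hb1 : b1 = g * a1.
    have : g * a1 + d * a0 = b1 * (a0 * a0 + a1 * a1) by rewrite /g /d; ring.
    by rewrite na mulr1 d0 mul0r addr0 => <-.
  move: g hb0 hb1 => g hb0 hb1.
  have h0 : g * (A o o * a0 + A o x * a1) = A o o * b0 + A o x * b1.
    by rewrite hb0 hb1; ring.
  have h1 : g * (A x o * a0 + A x x * a1) = A x o * b0 + A x x * b1.
    by rewrite hb0 hb1; ring.
  rewrite e10 e20 hb0 in h0; rewrite e11 e21 hb1 in h1.
  have l0 : lambda1 - lambda2 != 0 by rewrite subr_eq0 gt_eqF.
  have ga0 : g * a0 = 0.
    have : g * a0 * (lambda1 - lambda2) = 0.
      have -> : g * a0 * (lambda1 - lambda2) = g * (lambda1 * a0) - lambda2 * (g * a0) by ring.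
      by rewrite h0 subrr.
    by move/eqP; rewrite mulf_eq0 (negPf l0) orbF => /eqP.
  have ga1 : g * a1 = 0.
    have : g * a1 * (lambda1 - lambda2) = 0.
      have -> : g * a1 * (lambda1 - lambda2) = g * (lambda1 * a1) - lambda2 * (g * a1) by ring.
      by rewrite h1 subrr.
    by move/eqP; rewrite mulf_eq0 (negPf l0) orbF => /eqP.
  by move: nb; rewrite hb0 hb1 ga0 ga1 mulr0 addr0 => /eqP; rewrite eq_sym oner_eq0.
pose Qm : 'M[R]_2 := \matrix_(i < 2, j < 2)
  ((if i == o then (if j == o then b1 else - b0) else (if j == o then - a1 else a0)) / d).
have hQ : Qm *m Psi = 1%:M.
  apply/matrixP => i j; rewrite [LHS]mxE sum2 ![Qm _ _]mxE [RHS]mxE.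
  by case: (I2P j) => ->; case: (I2P i) => ->; rewrite ?ePsi0 ?ePsi1 /= -/a0 -/a1 -/b0 -/b1 /d; field; rewrite -/d.
have hPsiU : Psi \in unitmx := (mulmx1_unit hQ).2.
pose P := invmx Psi.
have hPP : P *m Psi = 1%:M := mulVmx hPsiU.
have hPP' : Psi *m P = 1%:M := mulmxV hPsiU.
have hPe i j : P i o * Psi o j + P i x * Psi x j = (i == j)%:R.
  have h := congr1 (fun M : 'M[R]_2 => M i j) hPP.
  by rewrite /= [LHS]mxE sum2 [RHS]mxE in h.
have pr00 : P o o * a0 + P o x * a1 = 1 by have := hPe o o; rewrite !ePsi0.
have pr01 : P o o * b0 + P o x * b1 = 0 by have := hPe o x; rewrite !ePsi1.
have pr10 : P x o * a0 + P x x * a1 = 0 by have := hPe x o; rewrite !ePsi0.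
have pr11 : P x o * b0 + P x x * b1 = 1 by have := hPe x x; rewrite !ePsi1.
pose k0 t := K t o z; pose k1 t := K t x z.
have hk0 t : k0 t = P o o * U t o z + P o x * U t x z by rewrite /k0 /K mxE sum2.
have hk1 t : k1 t = P x o * U t o z + P x x * U t x z by rewrite /k1 /K mxE sum2.
have hUK t : U t = Psi *m K t by rewrite /K mulmxA hPP' mul1mx.
have hu0 t : U t o z = a0 * k0 t + b0 * k1 t.
  have h := congr1 (fun M : 'cV[R]_2 => M o z) (hUK t).
  by rewrite /= [in RHS]mxE sum2 ePsi0 ePsi1 in h.
have hu1 t : U t x z = a1 * k0 t + b1 * k1 t.
  have h := congr1 (fun M : 'cV[R]_2 => M x z) (hUK t).
  by rewrite /= [in RHS]mxE sum2 ePsi0 ePsi1 in h.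
pose g := a0 * b0 + a1 * b1.
pose q t := lambda1 * (k0 t * k0 t) + (lambda1 + lambda2) * g * (k0 t * k1 t) + lambda2 * (k1 t * k1 t).
have hAu0 t : A o o * U t o z + A o x * U t x z = lambda1 * a0 * k0 t + lambda2 * b0 * k1 t.
  rewrite (hu0 t) (hu1 t).
  transitivity (k0 t * (A o o * a0 + A o x * a1) + k1 t * (A o o * b0 + A o x * b1)); first ring.
  by rewrite e10 e20; ring.
have hAu1 t : A x o * U t o z + A x x * U t x z = lambda1 * a1 * k0 t + lambda2 * b1 * k1 t.
  rewrite (hu0 t) (hu1 t).
  transitivity (k0 t * (A x o * a0 + A x x * a1) + k1 t * (A x o * b0 + A x x * b1)); first ring.
  by rewrite e11 e21; ring.
have hQt t : U t o z * (A o o * U t o z + A o x * U t x z) +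
             U t x z * (A x o * U t o z + A x x * U t x z) = q t.
  rewrite hAu0 hAu1 (hu0 t) (hu1 t).
  transitivity (lambda1 * (k0 t * k0 t) * (a0 * a0 + a1 * a1) + (lambda1 + lambda2) * g * (k0 t * k1 t)
     + lambda2 * (k1 t * k1 t) * (b0 * b0 + b1 * b1)); first by rewrite /g; ring.
  by rewrite na nb !mulr1.
have ek0 : k0 = fun s => P o o * U s o z + P o x * U s x z by apply/funext => s; exact: hk0.
have ek1 : k1 = fun s => P x o * U s o z + P x x * U s x z by apply/funext => s; exact: hk1.
have dk0 : forall t : R, 0 < t -> is_derive t 1 k0 ((lambda1 - q t) * k0 t).
  move=> t t0.
  have du0 := @entry_derive _ _ _ _ _ _ o z (dU t t0).
  have du1 := @entry_derive _ _ _ _ _ _ x z (dU t t0).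
  rewrite {1}ek0; apply: is_derive_eq (dD (dcM (P o o) du0) (dcM (P o x) du1)) _.
  rewrite !oja_entry hQt hAu0 hAu1.
  transitivity (lambda1 * k0 t * (P o o * a0 + P o x * a1) + lambda2 * k1 t * (P o o * b0 + P o x * b1)
     - q t * (P o o * U t o z + P o x * U t x z)); first ring.
  by rewrite pr00 pr01 -hk0; ring.
have dk1 : forall t : R, 0 < t -> is_derive t 1 k1 ((lambda2 - q t) * k1 t).
  move=> t t0.
  have du0 := @entry_derive _ _ _ _ _ _ o z (dU t t0).
  have du1 := @entry_derive _ _ _ _ _ _ x z (dU t t0).
  rewrite {1}ek1; apply: is_derive_eq (dD (dcM (P x o) du0) (dcM (P x x) du1)) _.
  rewrite !oja_entry hQt hAu0 hAu1.
  transitivity (lambda1 * k0 t * (P x o * a0 + P x x * a1) + lambda2 * k1 t * (P x o * b0 + P x x * b1)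
     - q t * (P x o * U t o z + P x x * U t x z)); first ring.
  by rewrite pr10 pr11 -hk1; ring.
have cu i : {within `[0, +oo[, continuous (fun s => U s i z)}.
  move=> y; exact: (continuous_comp (cU y) (@coord_continuous R 2 1 i z (U y))).
have ck0 : {within `[0, +oo[, continuous k0}.
  by rewrite ek0; apply: wD; apply: wM; [exact: wC|exact: cu|exact: wC|exact: cu].
have ck1 : {within `[0, +oo[, continuous k1}.
  by rewrite ek1; apply: wD; apply: wM; [exact: wC|exact: cu|exact: wC|exact: cu].
have N0 : k0 0 * k0 0 + 2 * g * (k0 0 * k1 0) + k1 0 * k1 0 = 1.
  rewrite -[RHS]nu (hu0 0) (hu1 0).
  transitivity ((k0 0 * k0 0) * (a0 * a0 + a1 * a1) + 2 * g * (k0 0 * k1 0)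
     + (k1 0 * k1 0) * (b0 * b0 + b1 * b1)); first by rewrite na nb !mulr1.
  by rewrite /g; ring.
have c0n0 : k0 0 != 0.
  apply/negP => /eqP h0.
  have h1 : k1 0 * k1 0 = 1 by move: N0; rewrite h0 !mul0r mulr0 !add0r.
  have hs : k1 0 = 1 \/ k1 0 = -1.
    have : (k1 0 - 1) * (k1 0 + 1) = 0.
      have -> : (k1 0 - 1) * (k1 0 + 1) = k1 0 * k1 0 - 1 by ring.
      by rewrite h1 subrr.
    move/eqP; rewrite mulf_eq0 => /orP[]; rewrite ?subr_eq0 ?addr_eq0 => /eqP ->.
      by left.
    by right.
  move: (hK _ hs); rewrite Sig1 sqrtr1 invr1 mulr1 => /negP; apply.
  apply/eqP/matrixP => i j; rewrite (ord1 j) /vec2 [RHS]mxE.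
  by case: (I2P i) => -> /=; [exact: h0|].
have [s hs [c0 c1]] := @core _ k0 k1 q lambda1 lambda2 g l21 ck0 ck1 (fun t => erefl) dk0 dk1 N0 c0n0.
exists s => //.
rewrite Sig0 sqrtr1 invr1 mulr1.
have eU : U = fun t => k0 t *: psi1 + k1 t *: psi2.
  apply/funext => t; apply/matrixP => i j; rewrite (ord1 j) !mxE.
  by case: (I2P i) => ->; rewrite ?hu0 ?hu1 -/a0 -/a1 -/b0 -/b1; ring.
rewrite eU; apply: cvg_trans (cvgD (cvgZr_tmp (a := psi1) c0) (cvgZr_tmp (a := psi2) c1)) _.
by rewrite scale0r addr0.
Qed.
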